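(* Let $J=p\ge1$, $\sigma_\varepsilon^2>0$, $I>0$, let $\mathbf{\Sigma}_\gamma$ be a nonnegative definite symmetric $J\times J$ matrix and $\mathbf{A}_{\bm\beta}$ a nonsingular $J\times J$ matrix. For an approximate design $\xi=(I_1,\dots,I_J)$ (reals $I_j\ge0$, $\sum_jI_j=I$) put $\mathbf{M}_0(\xi)=\mathrm{diag}(I_1,\dots,I_J)$ and $\mathbf{M}_{\bm\beta}(\xi)=\mathbf{A}_{\bm\beta}^{\mathrm T}\mathbf{M}_0(\xi)^{1/2}\big(\sigma_\varepsilon^2\mathbf{I}_J+\mathbf{M}_0(\xi)^{1/2}\mathbf{\Sigma}_\gamma\mathbf{M}_0(\xi)^{1/2}\big)^{-1}\mathbf{M}_0(\xi)^{1/2}\mathbf{A}_{\bm\beta}$ with $\mathbf{M}_0(\xi)^{1/2}=\mathrm{diag}(\sqrt{I_1},\dots,\sqrt{I_J})$. Let $\xi^*=(I_1^*,\dots,I_J^* )$ be a design with all $I_j^*>0$, and let $\psi_j$ denote the $j$th diagonal entry of $$\mathbf{M}_0(\xi^* )^{-1}\big(\sigma_\varepsilon^2\mathbf{M}_0(\xi^* )^{-1}+\mathbf{\Sigma}_\gamma\big)^{-1}\mathbf{M}_0(\xi^* )^{-1}.$$ Then $\xi^*$ is $D$-optimal if and only if $$I\psi_j=\mathrm{trace}\Big(\big(\sigma_\varepsilon^2\mathbf{M}_0(\xi^* )^{-1}+\mathbf{\Sigma}_\gamma\big)^{-1}\mathbf{M}_0(\xi^* )^{-1}\Big)\quad\text{for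 all } j=1,\dots,J.$$
   Context: $\mathbf{A}_{\bm\beta}$ is the Jacobian of the mean response curve at a fixed parameter $\bm\beta$, with as many parameters as time points. $\bm\beta$ is estimable under $\xi$ if $\mathbf{A}_{\bm\beta}$ has full column rank and its columns lie in the column space of $\mathbf{M}_0(\xi)$ (for $J=p$ this forces all $I_j>0$). A design $\xi^*$ is $D$-optimal if $\log\det\mathbf{M}_{\bm\beta}(\xi^* )\ge\log\det\mathbf{M}_{\bm\beta}(\xi)$ for all approximate designs $\xi$ with total $I$ under which $\bm\beta$ is estimable. *)

(* Defs.v *)
From HB Require Import structures.
From mathcomp Require Import all_boot all_order all_algebra.
From mathcomp Require Import reals exp.
Set Implicit Arguments. Unset Strict Implicit. Unset Printing Implicit Defensive.
Import Order.TTheory GRing.Theory Num.Theory.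
Local Open Scope ring_scope.

Section Design.
Variables (R : realType) (n : nat).

Definition is_design (I : R) (xi : 'I_n -> R) : Prop :=
  (forall j, 0 <= xi j) /\ \sum_(j < n) xi j = I.

Definition M0 (xi : 'I_n -> R) : 'M[R]_n := diag_mx (\row_j xi j).
Definition M0sqrt (xi : 'I_n -> R) : 'M[R]_n := diag_mx (\row_j Num.sqrt (xi j)).

Definition Mbeta (s2 : R) (Sg A : 'M[R]_n) (xi : 'I_n -> R) : 'M[R]_n :=
  A^T *m M0sqrt xi *m invmx (s2%:M + M0sqrt xi *m Sg *m M0sqrt xi)
      *m M0sqrt xi *m A.

(* beta estimable: A full column rank, columns of A in column space of M0 *)
Definition estimable (A : 'M[R]_n) (xi : 'I_n -> R) : Prop :=
  \rank A = n /\ (A^T <= (M0 xi)^T)%MS.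

Definition D_optimal (I s2 : R) (Sg A : 'M[R]_n) (xis : 'I_n -> R) : Prop :=
  is_design I xis /\ estimable A xis /\
  forall xi, is_design I xi -> estimable A xi ->
    ln (\det (Mbeta s2 Sg A xi)) <= ln (\det (Mbeta s2 Sg A xis)).
End Design.

(* Main.v *)
Require Import Defs.
From HB Require Import structures.
From mathcomp Require Import all_boot all_order all_algebra.
From mathcomp Require Import reals exp.
From mathcomp Require Import ring lra.
Set Implicit Arguments. Unset Strict Implicit. Unset Printing Implicit Defensive.
Import Order.TTheory GRing.Theory Num.Theory.
Local Open Scope ring_scope.


Definition PD {R : realType} n (M : 'M[R]_n) := forall v : 'rV_n, v != 0 -> 0 < (v *m M *m v^T) 0 0.

Lemma chol_step {R : realType} n (M : 'M[R]_(1 + n)) :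
  (forall S : 'M[R]_n, S^T = S -> PD S -> exists K : 'M_n, is_trig_mx K /\ S = K *m K^T) ->
  M^T = M -> PD M -> exists L : 'M_(1 + n), is_trig_mx L /\ M = L *m L^T.
Proof.
move=> IH Msym Mpos.
set b := ursubmx M; set D := drsubmx M; set al := ulsubmx M 0 0.
have Edl : dlsubmx M = b^T by rewrite /b trmx_ursub Msym.
have ED : D^T = D by rewrite /D trmx_drsub Msym.
have EM : M = block_mx al%:M b b^T D by rewrite /al -mx11_scalar -Edl submxK.
have al_gt0 : 0 < al.
  have := Mpos (row_mx 1%:M 0).
  rewrite EM tr_row_mx mul_row_block mul_row_col !mul0mx !addr0 mul1mx trmx0 mulmx0 addr0.
  rewrite tr_scalar_mx mulmx1 mxE eqxx mulr1n; apply.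
  rewrite row_mx_eq0 negb_and; apply/orP; left.
  apply/eqP => /matrixP/(_ 0 0); rewrite !mxE /= mulr1n => /eqP; rewrite oner_eq0.
  done.
set S := D - al^-1 *: (b^T *m b).
have Ssym : S^T = S.
  by rewrite /S linearB /= linearZ /= trmx_mul trmxK ED.
have Spos : PD S.
  move=> v vn0.
  set be := (b *m v^T) 0 0; set p := - (be / al).
  have := Mpos (row_mx p%:M v).
  have -> : (row_mx p%:M v *m M *m (row_mx p%:M v)^T) 0 0 = (v *m S *m v^T) 0 0.
    rewrite EM tr_row_mx mul_row_block mul_row_col.
    rewrite -scalar_mxM !mul_scalar_mx tr_scalar_mx !mul_mx_scalar mulmxDl.
    rewrite /S mulmxBr mulmxBl -!scalemxAr -!scalemxAl !mulmxA.
    have vb : (v *m b^T) 0 0 = be by rewrite /be !mxE; apply: eq_bigr => i _; rewrite !mxE mulrC.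
    have e4 : (v *m b^T *m b *m v^T) 0 0 = be * be.
      by rewrite -mulmxA mxE big_ord1 vb.
    rewrite /p /be in vb e4 *; move: vb e4.
    move: (v *m b^T) (v *m b^T *m b *m v^T) (b *m v^T) (v *m D *m v^T) => m1 m4 m2 m3 vb e4.
    by rewrite !mxE vb e4 eqxx mulr1n; field; rewrite gt_eqF.
  apply; rewrite row_mx_eq0 negb_and vn0 orbT //.
have [K [Ktrig EK]] := IH S Ssym Spos.
set s := Num.sqrt al.
have s_gt0 : 0 < s by rewrite sqrtr_gt0.
have ss : s * s = al by rewrite -expr2 sqr_sqrtr // ltW.
exists (block_mx s%:M 0 (s^-1 *: b^T) K); split.
  by rewrite is_trig_block_mx // eqxx scalar_mx_is_trig Ktrig.
rewrite tr_block_mx mulmx_block !trmx0 !mulmx0 !mul0mx !addr0.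
rewrite tr_scalar_mx -scalar_mxM ss mul_scalar_mx mul_mx_scalar !linearZ /= trmxK.
rewrite !scalerA mulVf ?gt_eqF // !scale1r -scalemxAl scalerA -invfM ss -EK /S.
by rewrite addrCA subrr addr0 {1}EM.
Qed.

Lemma chol {R : realType} n (M : 'M[R]_n) : M^T = M -> PD M ->
  exists L : 'M_n, is_trig_mx L /\ M = L *m L^T.
Proof.
elim: n M => [|n IH] M Msym Mpos.
  exists 0; split; first by apply/is_trig_mxP => -[].
  by apply/matrixP => -[].
exact: (chol_step IH Msym Mpos).
Qed.

Lemma det_le_trace {R : realType} n (G : 'M[R]_n) : G^T = G -> PD G ->
  \det G <= (\tr G / n%:R) ^+ n.
Proof.
move=> Gs Gp; have [K [Kt EK]] := chol Gs Gp.
have Gii i : G i i = \sum_k K i k ^+ 2.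
  by rewrite EK mxE; apply: eq_bigr => k _; rewrite mxE expr2.
have -> : \det G = \prod_i (K i i ^+ 2).
  by rewrite EK det_mulmx det_tr det_trig // -expr2 prodrXl.
apply: (@le_trans _ _ (\prod_i G i i)).
  apply: ler_prod => i _; rewrite sqr_ge0 /= Gii (bigD1 i) //= lerDl.
  by apply: sumr_ge0 => k _; rewrite sqr_ge0.
have Hge : {in predT, forall i, 0 <= G i i}.
  by move=> i _; rewrite Gii; apply: sumr_ge0 => k _; rewrite sqr_ge0.
have [H _] := leif_AGM Hge.
move: H; rewrite card_ord => H; apply: le_trans H _.
by rewrite /mxtrace.
Qed.

Lemma PD_unit {R : realType} n (M : 'M[R]_n) : PD M -> M \in unitmx.
Proof.
move=> Mp; rewrite -row_free_unit -kermx_eq0; apply/negPn/negP => Hk.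
have [i Hi] : exists i, row i (kermx M) != 0.
  case: (pickP (fun i => row i (kermx M) != 0)) => [i Hi|H]; first by exists i.
  case/negP: Hk; apply/eqP/matrixP => i j; move/negbFE/eqP/rowP: (H i) => /(_ j).
  by rewrite !mxE.
have := Mp _ Hi; rewrite -row_mul mulmx_ker row0 mul0mx mxE ltxx //.
Qed.

Lemma PD_det_gt0 {R : realType} n (M : 'M[R]_n) : M^T = M -> PD M -> 0 < \det M.
Proof.
move=> Ms Mp; have := PD_unit Mp; rewrite unitmxE unitfE => dn0.
have [L [_ EL]] := chol Ms Mp.
rewrite lt_def dn0 /= EL det_mulmx det_tr -expr2 sqr_ge0 //.
Qed.

Lemma inv_sym {R : realType} n (M : 'M[R]_n) : M^T = M -> (invmx M)^T = invmx M.
Proof. by move=> Ms; rewrite trmx_inv Ms. Qed.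

Lemma PD_inv {R : realType} n (M : 'M[R]_n) : M^T = M -> PD M -> PD (invmx M).
Proof.
move=> Ms Mp v vn0; have Mu := PD_unit Mp.
set u := v *m invmx M.
have Ev : v = u *m M by rewrite /u mulmxKV.
have un0 : u != 0 by apply: contraNneq vn0 => u0; rewrite Ev u0 mul0mx.
suff -> : (v *m invmx M *m v^T) 0 0 = (u *m M *m u^T) 0 0 by exact: Mp.
by rewrite -/u {1}Ev trmx_mul Ms mulmxA.
Qed.

Lemma sum_rows {R : realType} n (X Y : 'M[R]_n) :
  \sum_i (row i X *m Y *m (row i X)^T) 0 0 = \tr (X *m Y *m X^T).
Proof.
rewrite /mxtrace; apply: eq_bigr => i _; rewrite -row_mul !mxE.
by apply: eq_bigr => k _; rewrite !mxE.
Qed.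

Lemma qf_diag {R : realType} n (u w : 'rV[R]_n) d :
  (u *m diag_mx d *m w^T) 0 0 = \sum_j u 0 j * d 0 j * w 0 j.
Proof. by rewrite mul_mx_diag !mxE; apply: eq_bigr => j _; rewrite !mxE. Qed.

Lemma tr_diag_mul {R : realType} n (d : 'rV[R]_n) B :
  \tr (diag_mx d *m B) = \sum_j d 0 j * B j j.
Proof. by rewrite mul_diag_mx /mxtrace; apply: eq_bigr => j _; rewrite mxE. Qed.



Definition Dinv {R : realType} n (x : 'I_n -> R) : 'M[R]_n := diag_mx (\row_j (x j)^-1).
Definition Cm {R : realType} n (s2 : R) (Sg : 'M[R]_n) x := s2 *: Dinv x + Sg.
Definition PSD {R : realType} n (M : 'M[R]_n) := forall v : 'rV_n, 0 <= (v *m M *m v^T) 0 0.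

Lemma row_nz {R : realType} n (v : 'rV[R]_n) : v != 0 -> exists j, v 0 j != 0.
Proof.
move=> vn0; case: (pickP (fun j => v 0 j != 0)) => [j Hj|H]; first by exists j.
case/negP: vn0; apply/eqP/rowP => j; move/negbFE/eqP: (H j); by rewrite mxE.
Qed.

Lemma C_sym {R : realType} n (s2 : R) (Sg : 'M[R]_n) x :
  Sg^T = Sg -> (Cm s2 Sg x)^T = Cm s2 Sg x.
Proof. by move=> Ss; rewrite /Cm linearD /= linearZ /= Ss /Dinv tr_diag_mx. Qed.

Lemma qf_C {R : realType} n (s2 : R) (Sg : 'M[R]_n) x (u w : 'rV_n) :
  (u *m Cm s2 Sg x *m w^T) 0 0 =
  s2 * \sum_j u 0 j * (x j)^-1 * w 0 j + (u *m Sg *m w^T) 0 0.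
Proof.
rewrite /Cm mulmxDr mulmxDl -scalemxAr -scalemxAl !mxE.
by congr (_ * _ + _); apply: eq_bigr => j _; rewrite /Dinv mul_mx_diag !mxE.
Qed.

Lemma C_PD {R : realType} n (s2 : R) (Sg : 'M[R]_n) x :
  0 < s2 -> PSD Sg -> (forall j, 0 < x j) -> PD (Cm s2 Sg x).
Proof.
move=> s2p Sp xp v vn0; rewrite qf_C.
apply: ltr_pwDl; last exact: Sp.
apply: mulr_gt0 => //.
have [j vj] := row_nz vn0.
rewrite (bigD1 j) //=; apply: ltr_pwDl; last first.
  by apply: sumr_ge0 => k _; rewrite mulrAC -expr2 mulr_ge0 ?sqr_ge0 ?invr_ge0 ?ltW.
rewrite mulrAC -expr2; apply: mulr_gt0; last by rewrite invr_gt0.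
by rewrite exprn_even_gt0.
Qed.

Lemma mxED {R : realType} m n (A B : 'M[R]_(m, n)) i j : (A + B) i j = A i j + B i j.
Proof. by rewrite !mxE. Qed.
Lemma mxEB {R : realType} m n (A B : 'M[R]_(m, n)) i j : (A - B) i j = A i j - B i j.
Proof. by rewrite !mxE. Qed.
Lemma mxEZ {R : realType} m n a (A : 'M[R]_(m, n)) i j : (a *: A) i j = a * A i j.
Proof. by rewrite !mxE. Qed.

Lemma qf_sym {R : realType} n (M : 'M[R]_n) (a b : 'rV_n) :
  M^T = M -> (a *m M *m b^T) 0 0 = (b *m M *m a^T) 0 0.
Proof.
move=> Ms; transitivity ((a *m M *m b^T)^T 0 0); first by rewrite [in RHS]mxE.
by rewrite !trmx_mul trmxK Ms mulmxA.
Qed.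

Lemma bound {R : realType} n (s2 : R) (Sg : 'M[R]_n) x y (v : 'rV_n) :
  0 < s2 -> Sg^T = Sg -> PSD Sg -> (forall j, 0 < x j) -> (forall j, 0 < y j) ->
  (v *m invmx (Cm s2 Sg y) *m v^T) 0 0 <=
  (v *m invmx (Cm s2 Sg x) *m (diag_mx (\row_j (s2 * y j / x j ^+ 2)) + Sg)
     *m (v *m invmx (Cm s2 Sg x))^T) 0 0.
Proof.
move=> s2p Ss Sp xp yp.
have Ux := PD_unit (C_PD s2p Sp xp); have Uy := PD_unit (C_PD s2p Sp yp).
set Cx := Cm s2 Sg x in Ux *; set Cy := Cm s2 Sg y in Uy *.
have Cxs : Cx^T = Cx by exact: C_sym.
have Cys : Cy^T = Cy by exact: C_sym.
set w := v *m invmx Cx; set u := v *m invmx Cy.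
have Evw : v = w *m Cx by rewrite /w mulmxKV.
have Evu : v = u *m Cy by rewrite /u mulmxKV.
have e1 : u *m Cx *m w^T = u *m v^T.
  by rewrite [in RHS]Evw [in RHS]trmx_mul Cxs mulmxA.
have e2 : u *m Cy *m u^T = u *m v^T.
  by rewrite [in RHS]Evu [in RHS]trmx_mul Cys mulmxA.
have -> : (v *m invmx Cy *m v^T) 0 0 = 2 * (u *m Cx *m w^T) 0 0 - (u *m Cy *m u^T) 0 0.
  by rewrite e1 e2 -/u; ring.
rewrite /Cx /Cy !qf_C mulmxDr mulmxDl mxED qf_diag.
have hpsd := Sp (u - w).
rewrite linearB /= mulmxBl !mulmxBr !mxEB !mulmxBl !mxEB (qf_sym w u Ss) in hpsd.
set qa := (u *m Sg *m u^T) 0 0 in hpsd *.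
set qb := (u *m Sg *m w^T) 0 0 in hpsd *.
set qc := (w *m Sg *m w^T) 0 0 in hpsd *.
have hsum : 2 * (s2 * \sum_j u 0 j * (x j)^-1 * w 0 j)
   - s2 * \sum_j u 0 j * (y j)^-1 * u 0 j <=
   \sum_j w 0 j * (\row_j (s2 * y j / x j ^+ 2)) 0 j * w 0 j.
  rewrite !mulr_sumr -sumrB; apply: ler_sum => j _; rewrite mxE.
  have xj := xp j; have yj := yp j.
  rewrite -subr_ge0.
  have -> : w 0 j * (s2 * y j / x j ^+ 2) * w 0 j -
     (2 * (s2 * (u 0 j * (x j)^-1 * w 0 j)) - s2 * (u 0 j * (y j)^-1 * u 0 j))
     = s2 * (u 0 j - w 0 j * y j / x j) ^+ 2 / y j.
    by field; rewrite !gt_eqF.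
  by apply: divr_ge0; [apply: mulr_ge0; [exact: ltW | exact: sqr_ge0] | exact: ltW].
move: hsum hpsd; set P1 := s2 * _; set P2 := s2 * _; lra.
Qed.

Lemma PD_ge0 {R : realType} n (M : 'M[R]_n) (v : 'rV_n) : PD M -> 0 <= (v *m M *m v^T) 0 0.
Proof.
move=> Mp; have [->|vn0] := eqVneq v 0; first by rewrite !mul0mx mxE.
exact/ltW/Mp.
Qed.

Lemma convex {R : realType} n (s2 : R) (Sg : 'M[R]_n) x y :
  (0 < n)%N -> 0 < s2 -> Sg^T = Sg -> PSD Sg ->
  (forall j, 0 < x j) -> (forall j, 0 < y j) -> \sum_j y j = \sum_j x j ->
  (exists c, forall j, invmx (Cm s2 Sg x) j j / x j ^+ 2 = c) ->
  \det (Cm s2 Sg x) <= \det (Cm s2 Sg y).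
Proof.
move=> n0 s2p Ss Sp xp yp sxy [c hc].
have Cxp := C_PD s2p Sp xp; have Cyp := C_PD s2p Sp yp.
have Cxs : (Cm s2 Sg x)^T = Cm s2 Sg x by exact: C_sym.
have Cys : (Cm s2 Sg y)^T = Cm s2 Sg y by exact: C_sym.
have Ux := PD_unit Cxp.
have dCx := PD_det_gt0 Cxs Cxp; have dCy := PD_det_gt0 Cys Cyp.
have Byp := PD_inv Cys Cyp.
have Bys := inv_sym Cys; have Bxs := inv_sym Cxs.
set Cx := Cm s2 Sg x in Cxp Cxs Ux dCx Bxs hc *.
set Cy := Cm s2 Sg y in Cyp Cys dCy Byp Bys *.
have [L [_ EL]] := chol Cxs Cxp.
have dL : \det L != 0.
  by apply: contraTneq dCx => dL0; rewrite EL det_mulmx det_tr dL0 mul0r ltxx.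
have ULt : L^T \in unitmx by rewrite unitmx_tr unitmxE unitfE.
set G := L^T *m invmx Cy *m L.
have Gs : G^T = G by rewrite /G !trmx_mul trmxK Bys mulmxA.
have Gp : PD G.
  move=> v vn0; rewrite /G.
  have vL : v *m L^T != 0.
    apply: contraNneq vn0 => h; by rewrite -(mulmxK ULt v) h mul0mx.
  have := Byp _ vL; by rewrite trmx_mul trmxK !mulmxA.
have hdet : \det G = \det Cx / \det Cy.
  by rewrite /G !det_mulmx det_inv det_tr EL det_mulmx det_tr mulrAC.
have hB j : invmx Cx j j = c * x j ^+ 2.
  by rewrite -(hc j) divfK // gt_eqF // exprn_gt0.
set E := diag_mx (\row_j (s2 * y j / x j ^+ 2)).
have htr : \tr G <= n%:R.
  have -> : \tr G = \sum_i (row i L^T *m invmx Cy *m (row i L^T)^T) 0 0.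
    by rewrite sum_rows trmxK.
  apply: (@le_trans _ _ (\sum_i (row i (L^T *m invmx Cx) *m (E + Sg) *m
            (row i (L^T *m invmx Cx))^T) 0 0)).
    apply: ler_sum => i _; rewrite row_mul; exact: bound.
  rewrite sum_rows mxtrace_mulC trmx_mul trmxK Bxs !mulmxA -(mulmxA (invmx Cx) L) -EL mulVmx // mul1mx.
  rewrite mxtrace_mulC -(mxtrace1 R n) -(mulmxV Ux) /Cx /Cm !mulmxDl !mxtraceD lerD2r.
  rewrite -scalemxAl mxtraceZ /E /Dinv !tr_diag_mul mulr_sumr; rewrite le_eqVlt; apply/orP; left; apply/eqP.
  transitivity (\sum_j s2 * c * y j).
    apply: eq_bigr => j _; rewrite !mxE hB; have := xp j => xj; field.
    by rewrite gt_eqF.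
  rewrite -mulr_sumr sxy mulr_sumr.
  apply: eq_bigr => j _; rewrite !mxE hB; have := xp j => xj; field.
  by rewrite gt_eqF.
have trG0 : 0 <= \tr G.
  rewrite /mxtrace; apply: sumr_ge0 => i _.
  have := PD_ge0 (delta_mx 0 i) Gp.
  by rewrite -rowE -row_mul mxE trmx_delta -colE mxE.
have := det_le_trace Gs Gp; rewrite hdet => h.
have h1 : \det Cx / \det Cy <= 1.
  apply: le_trans h _; apply: exprn_ile1.
    by rewrite divr_ge0 // ler0n.
  by rewrite ler_pdivrMr ?ltr0n // mul1r.
by move: h1; rewrite ler_pdivrMr // mul1r.
Qed.


Lemma det_affine {R : realType} n (N : 'M[R]_n) i a :
  \det (N + a *: delta_mx i i) = \det N + a * cofactor N i i.
Proof.
rewrite (expand_det_row _ i) [\det N](expand_det_row _ i).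
have Ecof j : cofactor (N + a *: delta_mx i i) i j = cofactor N i j.
  rewrite /cofactor; congr (_ * \det _); apply/matrixP => p q; rewrite !mxE.
  by rewrite eq_sym (negbTE (neq_lift _ _)) mulr0 addr0.
under eq_bigr => j _ do rewrite Ecof !mxE eqxx /= mulrDl.
rewrite big_split /=; congr (_ + _).
rewrite (bigD1 i) //= eqxx mulr1 big1 ?addr0 // => j /negbTE; rewrite eq_sym => ->.
by rewrite mulr0 mul0r.
Qed.

Lemma det_two {R : realType} n (C0 : 'M[R]_n) j k : exists d, forall a b,
  \det (C0 + a *: delta_mx j j + b *: delta_mx k k) =
  \det C0 + a * cofactor C0 j j + b * cofactor C0 k k + a * b * d.
Proof.
pose g b := cofactor (C0 + b *: delta_mx k k) j j.
pose h a := cofactor (C0 + a *: delta_mx j j) k k.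
have F1 a b : \det (C0 + a *: delta_mx j j + b *: delta_mx k k) =
   \det (C0 + b *: delta_mx k k) + a * g b.
  by rewrite addrAC [LHS]det_affine.
have F2 a b : \det (C0 + a *: delta_mx j j + b *: delta_mx k k) =
   \det (C0 + a *: delta_mx j j) + b * h a.
  by rewrite [LHS]det_affine.
have g0 : g 0 = cofactor C0 j j by rewrite /g scale0r addr0.
have h0 : h 0 = cofactor C0 k k by rewrite /h scale0r addr0.
have D1 a : \det (C0 + a *: delta_mx j j) = \det C0 + a * cofactor C0 j j.
  by rewrite det_affine.
have D2 b : \det (C0 + b *: delta_mx k k) = \det C0 + b * cofactor C0 k k.
  by rewrite det_affine.
exists (g 1 - g 0) => a b.
have ha : h a = h 0 + a * (g 1 - g 0).
  have e1 := F1 a 1; rewrite F2 D1 D2 in e1.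
  rewrite h0 g0; move: e1; rewrite !mul1r; set u := a * g 1; set w := a * cofactor C0 j j.
  rewrite mulrBr -/u -/w; lra.
rewrite F2 D1 ha h0 g0; ring.
Qed.

Lemma scalar_crit {R : realType} (s2 X Y cj ck d : R) : 0 < s2 -> 0 < X -> 0 < Y ->
  (forall t, - X < t -> t < Y ->
    0 <= s2 * ((X + t)^-1 - X^-1) * cj + s2 * ((Y - t)^-1 - Y^-1) * ck
         + s2 * ((X + t)^-1 - X^-1) * (s2 * ((Y - t)^-1 - Y^-1)) * d) ->
  X ^+ 2 * ck = Y ^+ 2 * cj.
Proof.
move=> s2p Xp Yp H.
set L0 := X ^+ 2 * ck - Y ^+ 2 * cj.
set L1 := X * ck + Y * cj - s2 * d.
have key t : - X < t -> t < Y -> 0 <= t * L0 + t * t * L1.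
  move=> h1 h2; have := H t h1 h2.
  have Xt : 0 < X + t by lra.
  have Yt : 0 < Y - t by lra.
  have -> : s2 * ((X + t)^-1 - X^-1) * cj + s2 * ((Y - t)^-1 - Y^-1) * ck
         + s2 * ((X + t)^-1 - X^-1) * (s2 * ((Y - t)^-1 - Y^-1)) * d
         = (t * L0 + t * t * L1) * (s2 / (X * (X + t) * Y * (Y - t))).
    rewrite /L0 /L1; field.
    by rewrite !gt_eqF.
  rewrite pmulr_lge0 //; apply: divr_gt0 => //.
  by rewrite !mulr_gt0.
apply/eqP; rewrite -subr_eq0 -/L0; apply/negPn/negP => hL0.
set tau := Num.min (Num.min (X / 2) (Y / 2)) (`|L0| / (2 * (`|L1| + 1))).
have hL0p : 0 < `|L0| by rewrite normr_gt0.
have hL1 : 0 <= `|L1| by [].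
have L1le : L1 <= `|L1| by exact: ler_norm.
have taup : 0 < tau.
  rewrite !lt_min !divr_gt0 //; lra.
have := le_refl tau; rewrite {1}/tau !le_min => /andP[/andP[t1 t2] t3].
have tX : tau < X.
  apply: le_lt_trans t1 _; rewrite ltr_pdivrMr //; lra.
have tY : tau < Y.
  apply: le_lt_trans t2 _; rewrite ltr_pdivrMr //; lra.
have t3' : tau * (2 * (`|L1| + 1)) <= `|L0|.
  by move: t3; rewrite ler_pdivlMr //; lra.
have tl1 : tau * L1 <= tau * `|L1| by rewrite ler_wpM2l // ltW.
have tl1p : 0 <= tau * `|L1| by rewrite mulr_ge0 // ltW.
have t4 : 2 * (tau * `|L1|) + 2 * tau <= `|L0|.
  by move: t3'; rewrite mulrDr mulrDr mulr1 mulrCA [tau * 2]mulrC.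
case: (ltrgt0P L0) => [L0p|L0n|L0z]; last by rewrite L0z eqxx in hL0.
- have := key (- tau); rewrite !mulNr mulrN => /(_ _ _).
  move=> /(_ _ _) h; have {h} h := h ltac:(lra) ltac:(lra).
  have h' : 0 <= tau * (tau * L1 - L0) by rewrite mulrBr mulrA; lra.
  rewrite pmulr_rge0 // in h'.
  move: t4; rewrite (gtr0_norm L0p); lra.
- have h := key tau ltac:(lra) ltac:(lra).
  have h' : 0 <= tau * (L0 + tau * L1) by rewrite mulrDr mulrA.
  rewrite pmulr_rge0 // in h'.
  move: t4; rewrite (ltr0_norm L0n); lra.
Qed.

Lemma sum_ind {R : realType} n (j : 'I_n) : \sum_i ((i == j)%:R : R) = 1.
Proof.
rewrite (bigD1 j) //= eqxx big1 ?addr0 // => i /negbTE ->; by [].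
Qed.

Lemma invmx_diag_entry {R : realType} n (M : 'M[R]_n) j :
  M \in unitmx -> invmx M j j = cofactor M j j / \det M.
Proof. by move=> U; rewrite /invmx U !mxE mulrC. Qed.

Lemma perturb {R : realType} n (s2 : R) (Sg : 'M[R]_n) x j k :
  0 < s2 -> Sg^T = Sg -> PSD Sg -> (forall i, 0 < x i) -> j != k ->
  (forall y, (forall i, 0 < y i) -> \sum_i y i = \sum_i x i ->
     \det (Cm s2 Sg x) <= \det (Cm s2 Sg y)) ->
  invmx (Cm s2 Sg x) j j / x j ^+ 2 = invmx (Cm s2 Sg x) k k / x k ^+ 2.
Proof.
move=> s2p Ss Sp xp jk Hopt.
have Cxp := C_PD s2p Sp xp.
have Cxs : (Cm s2 Sg x)^T = Cm s2 Sg x by exact: C_sym.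
have Ux := PD_unit Cxp; have dC := PD_det_gt0 Cxs Cxp.
set C0 := Cm s2 Sg x in Cxp Cxs Ux dC Hopt *.
have [d hd] := det_two C0 j k.
have xj := xp j; have xk := xp k.
have crit := @scalar_crit R s2 (x j) (x k) (cofactor C0 j j) (cofactor C0 k k) d s2p xj xk.
have {crit} crit : x j ^+ 2 * cofactor C0 k k = x k ^+ 2 * cofactor C0 j j.
  apply: crit => t h1 h2.
  pose y := fun i => x i + t * ((i == j)%:R - (i == k)%:R).
  have yj : y j = x j + t by rewrite /y eqxx (negbTE jk) subr0 mulr1.
  have yk : y k = x k - t by rewrite /y eqxx eq_sym (negbTE jk) sub0r mulrN1.
  have yp : forall i, 0 < y i.
    move=> i; case: (eqVneq i j) => [->|ij]; first by rewrite yj; lra.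
    case: (eqVneq i k) => [->|ik]; first by rewrite yk; lra.
    by rewrite /y (negbTE ij) (negbTE ik) subrr mulr0 addr0.
  have ys : \sum_i y i = \sum_i x i.
    rewrite /y big_split /= -mulr_sumr sumrB !sum_ind subrr mulr0 addr0 //.
  have := Hopt y yp ys.
  have -> : Cm s2 Sg y = C0 + (s2 * ((x j + t)^-1 - (x j)^-1)) *: delta_mx j j
                            + (s2 * ((x k - t)^-1 - (x k)^-1)) *: delta_mx k k.
    apply/matrixP => p q; rewrite /C0 /Cm /Dinv !mxE.
    case: (eqVneq p q) => [<-|pq]; last first.
      rewrite !mulr0n !mulr0 !add0r.
      have -> : (p == j) && (q == j) = false.
        by apply/negbTE; apply: contra pq => /andP[/eqP -> /eqP ->].
      have -> : (p == k) && (q == k) = false.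
        by apply/negbTE; apply: contra pq => /andP[/eqP -> /eqP ->].
      by rewrite !mulr0 !addr0.
    rewrite !mulr1n !andbb.
    case: (eqVneq p j) => [->|pj].
      rewrite (negbTE jk) yj mulr1 mulr0 addr0; ring.
    case: (eqVneq p k) => [->|pk].
      rewrite yk mulr1 mulr0 addr0; ring.
    by rewrite /y (negbTE pj) (negbTE pk) subrr mulr0 addr0 !mulr0 !addr0.
  by rewrite hd -!addrA lerDl !addrA.
rewrite !invmx_diag_entry //.
have e : cofactor C0 k k = x k ^+ 2 * cofactor C0 j j / x j ^+ 2.
  by rewrite -crit mulrC mulKf // expf_neq0 // gt_eqF.
rewrite e; field.
by rewrite !gt_eqF.
Qed.


Lemma diag_eq1 {R : realType} n (d : 'rV[R]_n) : (forall j, d 0 j = 1) -> diag_mx d = 1%:M.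
Proof.
by move=> h; apply/matrixP => p q; rewrite !mxE h.
Qed.

Lemma inv_uniq {R : realType} n (A B : 'M[R]_n) : A *m B = 1%:M -> invmx A = B.
Proof.
move=> h; have [UA _] := mulmx1_unit h.
by rewrite -[invmx A]mulmx1 -h mulmxA mulVmx // mul1mx.
Qed.

Lemma M0_inv {R : realType} n (x : 'I_n -> R) : (forall j, 0 < x j) ->
  invmx (M0 x) = Dinv x.
Proof.
move=> xp; apply: inv_uniq; rewrite /M0 /Dinv mulmx_diag diag_eq1 // => j.
by rewrite !mxE mulfV // gt_eqF.
Qed.

Lemma M0_det {R : realType} n (x : 'I_n -> R) : \det (M0 x) = \prod_j x j.
Proof. by rewrite /M0 det_diag; apply: eq_bigr => j _; rewrite mxE. Qed.

Lemma Mbeta_eq {R : realType} n (s2 : R) (Sg A : 'M[R]_n) x :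
  0 < s2 -> PSD Sg -> (forall j, 0 < x j) ->
  Mbeta s2 Sg A x = A^T *m invmx (Cm s2 Sg x) *m A.
Proof.
move=> s2p Sp xp.
have UC := PD_unit (C_PD s2p Sp xp).
set S := M0sqrt x.
set Si : 'M_n := diag_mx (\row_j (Num.sqrt (x j))^-1).
have sq j : 0 < Num.sqrt (x j) by rewrite sqrtr_gt0.
have SSi : S *m Si = 1%:M.
  by rewrite /S /Si /M0sqrt mulmx_diag diag_eq1 // => j; rewrite !mxE mulfV // gt_eqF.
have SiS : Si *m S = 1%:M.
  by rewrite /S /Si /M0sqrt mulmx_diag diag_eq1 // => j; rewrite !mxE mulVf // gt_eqF.
have SDS : S *m Dinv x *m S = 1%:M.
  rewrite /S /M0sqrt /Dinv !mulmx_diag diag_eq1 // => j; rewrite !mxE.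
  rewrite mulrAC -expr2 sqr_sqrtr ?mulfV ?gt_eqF // ltW //.
have EX : s2%:M + S *m Sg *m S = S *m Cm s2 Sg x *m S.
  by rewrite /Cm mulmxDr mulmxDl -scalemxAr -scalemxAl SDS scalemx1.
have Ei : invmx (s2%:M + S *m Sg *m S) = Si *m invmx (Cm s2 Sg x) *m Si.
  apply: inv_uniq; rewrite EX !mulmxA -(mulmxA _ S Si) SSi mulmx1.
  by rewrite -(mulmxA _ _ (invmx _)) mulmxV // mulmx1 SSi.
rewrite /Mbeta -/S Ei !mulmxA -(mulmxA _ S Si) SSi mulmx1.
by rewrite -(mulmxA _ Si S) SiS mulmx1.
Qed.

Lemma det_Mbeta {R : realType} n (s2 : R) (Sg A : 'M[R]_n) x :
  0 < s2 -> PSD Sg -> (forall j, 0 < x j) ->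
  \det (Mbeta s2 Sg A x) = \det A ^+ 2 / \det (Cm s2 Sg x).
Proof.
move=> s2p Sp xp; rewrite Mbeta_eq // !det_mulmx det_tr det_inv; ring.
Qed.

Lemma pos_estimable {R : realType} n (A : 'M[R]_n) x :
  A \in unitmx -> (forall j, 0 < x j) -> estimable A x.
Proof.
move=> Au xp; split; first exact: mxrank_unit.
apply: submx_full; rewrite row_full_unit unitmx_tr unitmxE unitfE M0_det.
by apply/prodf_neq0 => j _; rewrite gt_eqF.
Qed.

Lemma estimable_pos {R : realType} n (A : 'M[R]_n) x I :
  A \in unitmx -> is_design I x -> estimable A x -> forall j, 0 < x j.
Proof.
move=> Au [xge _] [_ sub] j.
have hr := mxrankS sub; rewrite mxrank_tr mxrank_unit // in hr.
have hf : row_full (M0 x)^T.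
  by rewrite /row_full eqn_leq rank_leq_col hr.
move: hf; rewrite row_full_unit unitmx_tr unitmxE unitfE M0_det.
move/prodf_neq0 => /(_ j isT) xj0.
by rewrite lt_def xj0 xge.
Qed.

Lemma psi_entry {R : realType} n (x : 'I_n -> R) (B : 'M[R]_n) j :
  (forall j, 0 < x j) -> (Dinv x *m B *m Dinv x) j j = B j j / x j ^+ 2.
Proof.
move=> xp; rewrite /Dinv mul_mx_diag mul_diag_mx !mxE.
by have := xp j => xj; field; rewrite gt_eqF.
Qed.

Unset Implicit Arguments.

Theorem corollary2 (R : realType) (n : nat) (I s2 : R) (Sg A : 'M[R]_n)
  (xis : 'I_n -> R) :
  (0 < n)%N -> 0 < s2 -> 0 < I ->
  Sg^T = Sg -> (forall v : 'rV[R]_n, 0 <= (v *m Sg *m v^T) 0 0) ->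
  A \in unitmx ->
  is_design I xis -> (forall j, 0 < xis j) ->
  (D_optimal I s2 Sg A xis <->
   forall j : 'I_n,
     I * (invmx (M0 xis) *m invmx (s2 *: invmx (M0 xis) + Sg)
            *m invmx (M0 xis)) j j
     = \tr (invmx (s2 *: invmx (M0 xis) + Sg) *m invmx (M0 xis))).
Proof.
move=> n0 s2p Ip Ss Sp Au dx xp.
have Sp' : PSD Sg := Sp.
rewrite M0_inv //.
have hC : s2 *: Dinv xis + Sg = Cm s2 Sg xis by [].
rewrite hC.
set B := invmx (Cm s2 Sg xis).
have Hpsi j : (Dinv xis *m B *m Dinv xis) j j = B j j / xis j ^+ 2.
  exact: psi_entry.
have Htr : \tr (B *m Dinv xis) = \sum_k xis k * (B k k / xis k ^+ 2).
  rewrite mxtrace_mulC /Dinv tr_diag_mul; apply: eq_bigr => k _; rewrite mxE.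
  by have := xp k => xk; field; rewrite gt_eqF.
have sI : \sum_k xis k = I by case: dx.
have dA : 0 < \det A ^+ 2.
  by rewrite exprn_even_gt0 //; move: Au; rewrite unitmxE unitfE.
have Cpos y : (forall i, 0 < y i) -> 0 < \det (Cm s2 Sg y).
  move=> yp; apply: PD_det_gt0; [exact: C_sym | exact: C_PD].
have Eopt : D_optimal I s2 Sg A xis <->
   (forall y, (forall i, 0 < y i) -> \sum_i y i = \sum_i xis i ->
      \det (Cm s2 Sg xis) <= \det (Cm s2 Sg y)).
  split.
  - case=> _ [_ H] y yp sy.
    have dy : is_design I y.
      by split; [move=> i; exact: ltW | rewrite sy sI].
    have := H y dy (pos_estimable Au yp).
    rewrite ler_ln ?posrE ?det_Mbeta ?divr_gt0 ?Cpos //.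
    by rewrite ler_pM2l // lef_pV2 ?posrE ?Cpos.
  - move=> H; split; first exact: dx; split; first exact: pos_estimable.
    move=> xi dxi exi; have xip := estimable_pos Au dxi exi.
    rewrite ler_ln ?posrE ?det_Mbeta ?divr_gt0 ?Cpos //.
    rewrite ler_pM2l // lef_pV2 ?posrE ?Cpos //.
    by apply: H => //; case: dxi => _ ->; rewrite sI.
rewrite Eopt; split.
- move=> H j.
  have hpsi k : B k k / xis k ^+ 2 = B j j / xis j ^+ 2.
    case: (eqVneq k j) => [-> // | kj]; exact: perturb.
  rewrite Hpsi Htr; under eq_bigr => k _ do rewrite hpsi.
  by rewrite -mulr_suml sI.
- move=> H y yp sy; apply: convex => //.
  exists (\tr (B *m Dinv xis) / I) => j.
  by rewrite -/B -Hpsi -(H j) mulrC mulKf // gt_eqF.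
Qed.
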